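(* Let $X$ be a scalar random variable with distribution $\pi$ and upper bound $\ell\in\mathbb{R}$ such that $\mathbb{P}_\pi[X\le\ell]=1$. Let $\alpha\in(0,1]$, $\epsilon\in[0,1]$, and define \[ L(x,\mu,t)=t\left(\mu+e^{\frac{x}{t}-\mu-\ln(\alpha)-1}\right),\qquad u_b(\mu,t)=L(\ell,\mu,t). \] For $N$ independent samples $x_1,\dots,x_N$ of $X$, let $\zeta^*_N(\mu,t)=\max_{1\le k\le N}L(x_k,\mu,t)$. Then \[ \mathbb{P}^N_{\pi}\left[\mathrm{EVaR}_\alpha(X)\le \inf_{\mu\in\mathbb{R},\ t>0}\zeta^*_N(\mu,t)(1-\epsilon)+u_b(\mu,t)\epsilon\right]\ge 1-(1-\epsilon)^N. \]
   Context: The Entropic-Value-at-Risk at level $\alpha\in(0,1]$ is $\mathrm{EVaR}_\alpha(X)=\inf_{z>0}\frac{1}{z}\ln\left(\frac{\mathbb{E}_\pi[e^{zX}]}{\alpha}\right)$. $\zeta^*_N(\mu,t)$ is the solution of $\min_\zeta\zeta$ subject to $\zeta\ge L(x_i,\mu,t)$ for all $i$. $\mathbb{P}^N_\pi$ is the $N$-fold product measure governing the i.i.d. sample. *)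

(* Defs.v *)
From HB Require Import structures.
From mathcomp Require Import all_boot all_order all_algebra.
From mathcomp Require Import all_classical all_reals all_analysis.
Set Implicit Arguments. Unset Strict Implicit. Unset Printing Implicit Defensive.
Import Order.TTheory GRing.Theory Num.Theory.
Import numFieldNormedType.Exports.
Local Open Scope classical_set_scope.
Local Open Scope ring_scope.

(* E_pi[e^{zX}] as a real number (finite whenever X is a.s. bounded above). *)
Definition mgf (R : realType) (pi : probability R R) (z : R) : R :=
  fine (\int[pi]_x (expR (z * x))%:E)%E.

Definition EVaR (R : realType) (pi : probability R R) (alpha : R) : \bar R :=
  ereal_inf [set ((z^-1 * ln (mgf pi z / alpha))%:E) | z in [set z : R | 0 < z]].

Definition evar_L (R : realType) (alpha x mu t : R) : R :=
  t * (mu + expR (x / t - mu - ln alpha - 1)).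

(* zeta*_N(mu,t) = max_k L(x_k,mu,t) (as an extended real; finite when N >= 1) *)
Definition zetaN (R : realType) (N : nat) (alpha : R) (xs : 'I_N -> R) (mu t : R)
  : \bar R :=
  (\big[maxe/-oo]_(k < N) (evar_L alpha (xs k) mu t)%:E)%E.

(* Main.v *)
Require Import Defs.
From HB Require Import structures.
From mathcomp Require Import all_boot all_order all_algebra.
From mathcomp Require Import all_classical all_reals all_analysis.
From mathcomp Require Import ring lra measurable_realfun.
Import Order.TTheory GRing.Theory Num.Theory.
Import numFieldNormedType.Exports.
Local Open Scope classical_set_scope.
Local Open Scope ring_scope.

Lemma mu_bigcup_le (R : realType) (d : measure_display) (T : measurableType d)
  (mu : {measure set T -> \bar R}) (F : (set T)^nat) (b : \bar R) :
  (forall n, measurable (F n)) -> nondecreasing_seq F ->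
  (forall n, (mu (F n) <= b)%E) -> (mu (\bigcup_n F n) <= b)%E.
Proof.
move=> mF ndF Fb.
have := @nondecreasing_cvg_mu _ _ _ mu F mF (bigcupT_measurable F mF) ndF.
move/cvge_to_le; apply; exact: nearW.
Qed.

Lemma probE (R : realType) (pi : probability R R) (A : set R) :
  measurable A -> pi A = (fine (pi A))%:E.
Proof.
move=> mA; rewrite fineK // ge0_fin_numE ?measure_ge0 //.
by apply: (le_lt_trans (probability_le1 pi mA)); rewrite ltry.
Qed.

Lemma probC (R : realType) (pi : probability R R) (a : R) :
  pi `]-oo, a]%classic = (1 - pi `]a, +oo[%classic)%E.
Proof.
rewrite -(probability_setC pi (measurable_itv `]a, +oo[)).
by congr (pi _); rewrite setCitvr.
Qed.

Lemma quantile (R : realType) (pi : probability R R) (eps ell : R) :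
  eps < 1 -> (pi `]ell, +oo[%classic <= eps%:E)%E ->
  exists c, (pi `]c, +oo[%classic <= eps%:E)%E /\ (pi `]-oo, c[%classic <= (1 - eps)%:E)%E.
Proof.
move=> eps1 hell.
pose S := [set c : R | (pi `]c, +oo[%classic <= eps%:E)%E].
have Sell : S ell by [].
have [n hn] : exists n : nat, (eps%:E < pi `](-(n%:R))%R, +oo[%classic)%E.
  apply/not_existsP => hn.
  have : (pi (\bigcup_n `](-(n%:R))%R, +oo[%classic) <= eps%:E)%E.
    apply: mu_bigcup_le => //.
    - by move=> n m nm; apply/subsetPset => x /=; rewrite !in_itv /= !andbT; apply: le_lt_trans;
        rewrite lerN2 ler_nat.
    - by move=> k; rewrite leNgt; apply/negP => h; apply: (hn k).
  rewrite (_ : \bigcup_n _ = setT); last first.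
    apply/seteqP; split => // x _.
    exists (Num.Def.trunc (- x)).+1 => //=; rewrite in_itv /= andbT ltrNl.
    exact: truncnS_gt.
  by rewrite probability_setT lee_fin; lra.
have lbS : lbound S (- n%:R).
  move=> s Ss; rewrite leNgt; apply/negP => sn.
  have : (pi `](-(n%:R))%R, +oo[%classic <= pi `]s, +oo[%classic)%E.
    apply: le_measure; rewrite ?inE //.
    by move=> x /=; rewrite !in_itv /= !andbT; apply: lt_trans.
  by move/le_trans/(_ Ss); rewrite leNgt hn.
have hinf : has_inf S by split; [exists ell | exists (- n%:R)].
exists (inf S); split.
- have : (pi (\bigcup_k `](inf S + k.+1%:R^-1)%R, +oo[%classic) <= eps%:E)%E.
    apply: mu_bigcup_le => //.
    - move=> k m km; apply/subsetPset => x /=; rewrite !in_itv /= !andbT; apply: le_lt_trans.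
      by rewrite lerD2l lef_pV2 ?posrE // ler_nat.
    - move=> k; have : inf S < inf S + k.+1%:R^-1 by rewrite ltrDl invr_gt0.
      move=> /(inf_lt (proj1 hinf)) [s Ss sk].
      apply: le_trans Ss; apply: le_measure; rewrite ?inE //.
      by move=> x /=; rewrite !in_itv /= !andbT; apply: lt_trans.
  apply: le_trans; apply: le_measure; rewrite ?inE //.
    exact: bigcupT_measurable.
  move=> x /=; rewrite in_itv /= andbT => cx.
  move/ltr_add_invr: cx => [k hk]; exists k => //=; rewrite in_itv /= andbT.
  exact: hk.
have : (pi (\bigcup_k `]-oo, (inf S - k.+1%:R^-1)%R]%classic) <= (1 - eps)%:E)%E.
  apply: mu_bigcup_le => //.
  - move=> k m km; apply/subsetPset => x /=; rewrite !in_itv /=; move/le_trans; apply.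
    by rewrite lerD2l lerN2 lef_pV2 ?posrE // ler_nat.
  - move=> k; change (pi `]-oo, (inf S - k.+1%:R^-1)%R]%classic <= (1 - eps)%:E)%E; rewrite probC.
    have : ~ S (inf S - k.+1%:R^-1).
      move=> /(ge_inf (proj2 hinf)); rewrite leNgt => /negP; apply.
      by rewrite ltrBlDr ltrDl invr_gt0.
    rewrite /S /= => /negP; rewrite -ltNge (@probE _ pi _ (measurable_itv _)) lte_fin => h.
    by rewrite -EFinB lee_fin; lra.
apply: le_trans; apply: le_measure; rewrite ?inE //.
  exact: bigcupT_measurable.
move=> x /=; rewrite in_itv /= => cx.
move/ltr_add_invr: cx => [k hk]; exists k => //=; rewrite in_itv /=.
rewrite lerBrDr; exact: ltW.
Qed.
Lemma mexp (R : realType) (z : R) : measurable_fun [set: R] (fun x : R => (expR (z * x))%:E).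
Proof.
apply/measurable_EFinP; apply: measurableT_comp => //.
Qed.

Lemma int_lin (R : realType) (pi : probability R R) (c k a : R) : 0 <= c -> 0 <= k ->
  (\int[pi]_x (c%:E + k%:E * (\1_(`]a, +oo[%classic) x)%:E) =
   c%:E + k%:E * pi `]a, +oo[%classic)%E.
Proof.
move=> c0 k0.
have mi : measurable_fun setT (fun x : R => (\1_(`]a, +oo[%classic) x : R)%:E).
  exact/(measurable_EFinP [set: R] (\1_(`]a, +oo[%classic) : R -> R))/measurable_indic.
rewrite ge0_integralD //; try (by move=> x _; rewrite ?mule_ge0 ?lee_fin //);
  try (by apply: emeasurable_funM => //; exact: measurable_cst);
  try exact: measurable_cst.
rewrite ge0_integralZl_EFin //; try (by move=> x _; rewrite lee_fin).
rewrite integral_indic // setIT.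
rewrite integral_cst //; congr (_ + _); rewrite -[RHS]mule1; congr (_ * _)%E; exact: probability_setT.
Qed.

Lemma mgf_ub (R : realType) (pi : probability R R) (ell a eps z : R) :
  0 < z -> pi `]ell, +oo[%classic = 0%E -> a <= ell ->
  (pi `]a, +oo[%classic <= eps%:E)%E -> 0 <= eps ->
  (\int[pi]_x (expR (z * x))%:E <=
     (expR (z * a) + (expR (z * ell) - expR (z * a)) * eps)%:E)%E.
Proof.
move=> z0 hell al hp e0.
have k0 : 0 <= expR (z * ell) - expR (z * a).
  by rewrite subr_ge0 ler_expR ler_pM2l.
have H1 : (\int[pi]_x (expR (z * x))%:E <= \int[pi]_x ((expR (z * a))%:E +
   (expR (z * ell) - expR (z * a))%:E * (\1_(`]a, +oo[%classic) x : R)%:E))%E.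
  apply: ae_ge0_le_integral => //.
  - exact: mexp.
  - by move=> x _; rewrite adde_ge0 ?mule_ge0 ?lee_fin ?expR_ge0.
  - apply: emeasurable_funD; first exact: measurable_cst.
    apply: emeasurable_funM; first exact: measurable_cst.
    exact/(measurable_EFinP [set: R] (\1_(`]a, +oo[%classic) : R -> R))/measurable_indic.
  exists `]ell, +oo[%classic; split => //.
  move=> x /= hx; rewrite in_itv /= andbT ltNge; apply/negP => xl; apply: hx => _.
  rewrite indicE; case: (boolP (x \in _)) => ax; move: ax; rewrite mem_setE in_itv /= andbT => ax.
    by rewrite -EFinM mulr1 -EFinD lee_fin subrKC ler_expR ler_pM2l.
  by rewrite -EFinM mulr0 -EFinD addr0 lee_fin ler_expR ler_pM2l // leNgt.
apply: le_trans H1 _.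
rewrite int_lin ?expR_ge0 //.
rewrite (@probE _ pi _ (measurable_itv _)) -EFinM -EFinD lee_fin lerD2l.
rewrite ler_wpM2l //; rewrite -lee_fin -probE //.
Qed.

Lemma halfline (R : realType) (pi : probability R R) (eps : R) :
  eps < 1 -> exists n : nat, (eps%:E < pi `](-(n%:R))%R, +oo[%classic)%E.
Proof.
move=> eps1; apply/not_existsP => hn.
have : (pi (\bigcup_n `](-(n%:R))%R, +oo[%classic) <= eps%:E)%E.
  apply: mu_bigcup_le => //.
  - by move=> n m nm; apply/subsetPset => x /=; rewrite !in_itv /= !andbT; apply: le_lt_trans;
      rewrite lerN2 ler_nat.
  - by move=> k; rewrite leNgt; apply/negP => h; apply: (hn k).
rewrite (_ : \bigcup_n _ = setT); last first.
  apply/seteqP; split => // x _.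
  exists (Num.Def.trunc (- x)).+1 => //=; rewrite in_itv /= andbT ltrNl.
  exact: truncnS_gt.
by rewrite probability_setT lee_fin; lra.
Qed.

Lemma int_pos (R : realType) (pi : probability R R) (z : R) : 0 < z ->
  (0 < \int[pi]_x (expR (z * x))%:E)%E.
Proof.
move=> z0; have [n hn] := @halfline R pi 0 ltr01.
pose b : R := (- (n%:R))%R.
have H1 : (\int[pi]_x ((expR (z * b))%:E * (\1_(`]b, +oo[%classic) x : R)%:E)
     <= \int[pi]_x (expR (z * x))%:E)%E.
  apply: ge0_le_integral => //.
  - apply: emeasurable_funM; first exact: measurable_cst.
    exact/(measurable_EFinP [set: R] (\1_(`]b, +oo[%classic) : R -> R))/measurable_indic.
  - exact: mexp.
  move=> x _; rewrite indicE; case: (boolP (x \in _)) => ax; move: ax;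
    rewrite mem_setE in_itv /= andbT => ax.
    by rewrite -EFinM mulr1 lee_fin ler_expR ler_pM2l // ltW.
  by rewrite -EFinM mulr0 lee_fin expR_ge0.
apply: lt_le_trans H1.
rewrite ge0_integralZl_EFin //; try exact/(measurable_EFinP [set: R] (\1_(`]b, +oo[%classic) : R -> R))/measurable_indic.
rewrite integral_indic // setIT.
by rewrite mule_gt0 // lte_fin expR_gt0.
Qed.

Lemma evar_le (R : realType) (pi : probability R R) (alpha ell a mu t eps : R) :
  0 < alpha -> 0 < t -> pi `]ell, +oo[%classic = 0%E -> a <= ell ->
  (pi `]a, +oo[%classic <= eps%:E)%E -> 0 <= eps <= 1 ->
  (EVaR pi alpha <= ((1 - eps) * evar_L alpha a mu t + eps * evar_L alpha ell mu t)%:E)%E.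
Proof.
move=> a0 t0 hell al hp /andP[e0 e1].
pose z := t^-1.
have z0 : 0 < z by rewrite invr_gt0.
have h : (EVaR pi alpha <= (z^-1 * ln (mgf pi z / alpha))%:E)%E.
  by apply: ereal_inf_lbound; exists z.
apply: le_trans h _; rewrite invrK lee_fin.
have Ipos := @int_pos R pi z z0.
have Iub := @mgf_ub R pi ell a eps z z0 hell al hp e0.
set I := (\int[pi]_x _)%E in Ipos Iub.
have Ifin : I = (fine I)%:E.
  rewrite fineK // ge0_fin_numE ?ltW //.
  by apply: le_lt_trans Iub _; rewrite ltry.
rewrite /mgf -/I.
set Y := fine I.
have Y0 : 0 < Y by rewrite -lte_fin -Ifin.
have YB : Y <= expR (z * a) + (expR (z * ell) - expR (z * a)) * eps by rewrite -lee_fin -Ifin.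
pose K := expR (- mu - 1) / alpha.
have K0 : 0 < K by rewrite divr_gt0 // expR_gt0.
have hE x : expR (x / t - mu - ln alpha - 1) = expR (z * x) * K.
  rewrite /K (_ : x / t - mu - ln alpha - 1 = z * x + (- mu - 1) + - ln alpha).
    by rewrite expRD (expRD (z * x)) (expRN (ln alpha)) lnK ?posrE // mulrA.
  by rewrite /z; ring.
have hln : ln (Y / alpha) <= mu + K * Y.
  have := expR_ge1Dx (ln (Y / alpha) - mu - 1).
  rewrite (_ : ln (Y / alpha) - mu - 1 = ln (Y / alpha) + (- mu - 1)); last by ring.
  rewrite expRD lnK; last by rewrite posrE divr_gt0.
  rewrite /K; move=> hh.
  have -> : mu + expR (- mu - 1) / alpha * Y = mu + Y / alpha * expR (- mu - 1) by ring.
  lra.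
rewrite /evar_L !hE.
have : t * ln (Y / alpha) <= t * (mu + K * Y) by rewrite ler_pM2l.
move=> h1; apply: le_trans h1 _.
have : t * K * Y <= t * K * (expR (z * a) + (expR (z * ell) - expR (z * a)) * eps).
  by rewrite ler_pM2l // mulr_gt0.
move=> h2.
have -> : (1 - eps) * (t * (mu + expR (z * a) * K)) + eps * (t * (mu + expR (z * ell) * K))
   = t * mu + t * K * (expR (z * a) + (expR (z * ell) - expR (z * a)) * eps) by ring.
have -> : t * (mu + K * Y) = t * mu + t * K * Y by ring.
by rewrite lerD2l.
Qed.

Lemma prod_le (R : realType) (n : nat) (f : 'I_n -> \bar R) (b : R) :
  0 <= b -> (forall i, (0 <= f i <= b%:E)%E) -> (\prod_(i < n) f i <= (b ^+ n)%:E)%E.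
Proof.
move=> b0 hf; elim: n f hf => [|n IH] f hf; first by rewrite big_ord0 expr0.
rewrite big_ord_recr /= exprSr EFinM.
have := hf ord_max => /andP[f0 fb].
apply: lee_pmul => //.
  by apply: prode_ge0 => i _; have /andP[] := hf (widen_ord (leqnSn n) i).
exact: (IH (fun i => f (widen_ord (leqnSn n) i))).
Qed.

Lemma pointwise (R : realType) (pi : probability R R) (alpha ell eps : R) (N : nat)
  (xs : 'I_N -> R) (k0 : 'I_N) :
  pi `]ell, +oo[%classic = 0%E -> 0 < alpha -> 0 <= eps <= 1 ->
  (pi `](xs k0), +oo[%classic <= eps%:E)%E ->
  (EVaR pi alpha <=
      ereal_inf [set (zetaN alpha xs mu t * (1 - eps)%:E
                       + (evar_L alpha ell mu t * eps)%:E)%E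
                | mu in [set: R] & t in [set t : R | (0 < t)%R]])%E.
Proof.
move=> hell a0 /andP[e0 e1] hp.
apply: le_ereal_inf_tmp => _ [mu _ [t t0 <-]].
set m := xs k0.
have Lmono x y : x <= y -> evar_L alpha x mu t <= evar_L alpha y mu t.
  move=> xy; rewrite /evar_L ler_pM2l // lerD2l ler_expR !lerD2r.
  by rewrite ler_pM2r // invr_gt0.
have zm : ((evar_L alpha m mu t)%:E <= zetaN alpha xs mu t)%E.
  exact: (le_bigmax -oo%E (fun k => (evar_L alpha (xs k) mu t)%:E) k0).
suff H : forall a, a <= m -> a <= ell -> (pi `]a, +oo[%classic <= eps%:E)%E ->
  (EVaR pi alpha <= zetaN alpha xs mu t * (1 - eps)%:E + (evar_L alpha ell mu t * eps)%:E)%E.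
  have [ml|lm] := leP m ell; first exact: H.
  apply: (H ell (ltW lm) (lexx _)); rewrite hell lee_fin //.
move=> a am al ha.
apply: le_trans (@evar_le R pi alpha ell a mu t eps a0 t0 hell al ha _) _.
  by rewrite e0 e1.
apply: (@le_trans _ _ ((evar_L alpha m mu t * (1 - eps))%:E + (evar_L alpha ell mu t * eps)%:E)%E).
  rewrite -EFinD lee_fin.
  have h1 := Lmono _ _ am.
  have h2 : (1 - eps) * evar_L alpha a mu t <= (1 - eps) * evar_L alpha m mu t.
    by rewrite ler_wpM2l // subr_ge0.
  lra.
apply: leeD2r; rewrite EFinM.
by apply: lee_wpmul2r => //; rewrite lee_fin subr_ge0.
Qed.

Theorem corollary4 (R : realType) (d : measure_display) (Omega : measurableType d)
  (P : probability Omega R) (pi : probability R R) (ell alpha eps : R) (N : nat)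
  (Xs : 'I_N -> Omega -> R) :
  pi [set x : R | x <= ell] = 1%E ->
  0 < alpha <= 1 ->
  0 <= eps <= 1 ->
  (0 < N)%N ->
  (forall k, measurable_fun setT (Xs k)) ->
  (* x_1, ..., x_N are i.i.d. with distribution pi: their joint law is pi^N *)
  (forall B : 'I_N -> set R, (forall k, measurable (B k)) ->
     P (\bigcap_(k in [set: 'I_N]) (Xs k @^-1` B k)) = (\prod_(k < N) pi (B k))%E) ->
  exists A : set Omega, [/\ measurable A,
    A `<=` [set w | (EVaR pi alpha <=
      ereal_inf [set (zetaN alpha (fun k => Xs k w) mu t * (1 - eps)%:E
                       + (evar_L alpha ell mu t * eps)%:E)%E
                | mu in [set: R] & t in [set t : R | (0 < t)%R]])%E] &
    ((1 - (1 - eps) ^+ N)%:E <= P A)%E].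
Proof.
move=> hell /andP[a0 a1] he N0 mX hind.
have /andP[e0 e1] := he.
have hell' : pi `]ell, +oo[%classic = 0%E.
  have E : [set x : R | x <= ell] = `]-oo, ell]%classic.
    by apply/seteqP; split => x /=; rewrite in_itv.
  move: hell; rewrite E probC (@probE _ pi _ (measurable_itv _)) -EFinB => -[h].
  by rewrite (_ : fine _ = 0) //; lra.
have [e1'|e1'] := ltP eps 1; last first.
  have eq1 : eps = 1 by apply/le_anti; rewrite e1 e1'.
  exists setT; split => //.
  - move=> w _ /=; apply: (@pointwise R pi alpha ell eps N _ (Ordinal N0)) => //.
    by rewrite eq1; apply: probability_le1.
  - rewrite eq1 subrr expr0n gtn_eqF // subr0.
    by rewrite probability_setT.
have hq : (pi `]ell, +oo[%classic <= eps%:E)%E by rewrite hell' lee_fin.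
have [c [hc1 hc2]] := @quantile R pi eps ell e1' hq.
pose B := \bigcap_(k in [set: 'I_N]) (Xs k @^-1` `]-oo, c[%classic).
have mB : measurable B.
  apply: fin_bigcap_measurable => //.
  move=> k _; rewrite -[X in measurable X]setTI.
  exact: (mX k measurableT _ (measurable_itv _)).
exists (~` B); split.
- exact: measurableC.
- move=> w Bw /=.
  have [k hk] : exists k, c <= Xs k w.
    apply/not_existsP => H; apply: Bw => k _ /=; rewrite in_itv /= ltNge.
    by apply/negP; apply: H.
  apply: (@pointwise R pi alpha ell eps N _ k) => //.
  apply: le_trans hc1; apply: le_measure; rewrite ?inE //.
  by move=> x /=; rewrite !in_itv /= !andbT; apply: le_lt_trans.
- rewrite probability_setC // (hind (fun=> `]-oo, c[%classic)) //.
  have hp : (\prod_(k < N) pi `]-oo, c[%classic <= ((1 - eps) ^+ N)%:E)%E.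
    apply: prod_le; first by rewrite subr_ge0.
    by move=> i; rewrite measure_ge0 hc2.
  have q0 : (0 <= \prod_(k < N) pi `]-oo, c[%classic)%E.
    by apply: prode_ge0 => i _; rewrite measure_ge0.
  move: hp q0; set q := (\prod_(k < N) _)%E => hp q0.
  have qE : q = (fine q)%:E.
    rewrite fineK // ge0_fin_numE //; apply: le_lt_trans hp _; exact: ltry.
  move: hp q0; rewrite qE -EFinB !lee_fin => hp q0.
  by rewrite lerB.
Qed.
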